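(* Let $N\ge 2$ and $R\ge 3$, and let $S=\lfloor R/3\rfloor$. For every randomized online algorithm for routing in the Clos network $C_{N,R}$, there is a sequence of flows, each with demand $1$ (and satisfying the demand assumption below), for which the expected congestion of the routing returned by the algorithm is at least $2-\tfrac{1}{2^S}$.
   Context: Clos network $C_{N,R}$: a directed graph with $N$ middle switches $M_1,\dots,M_N$, $R$ input switches $I_1,\dots,I_R$, $R$ output switches $O_1,\dots,O_R$, source servers $s_i^k$ and destination servers $t_i^k$ ($i\in[R]$, $k\in[N]$), and edges $s_i^kI_i$, $I_iM_m$, $M_mO_i$, $O_it_i^k$ for all $i\in[R]$, $m,k\in[N]$; all links have capacity $1$. A flow $f$ has a source server $s(f)$ of input switch $I_{i(f)}$, a destination server $t(f)$ of output switch $O_{j(f)}$, and a positive demand $\mathrm{dem}(f)$; a set of flows must have total demand at most $1$ leaving each source server and entering each destination server. A routing $r$ assigns each flow a single middle switch $r(f)\in[N]$; its congestion is $\max_{i\in[R],m\in[N]}\max\{\sum_{f:i(f)=i,r(f)=m}\mathrm{dem}(f),\ \sum_{f:j(f)=i,r(f)=m}\mathrm{dem}(f)\}$. A deterministic online algorithm defines a routing for every sequence of flows such that for every prefix $P$ of a sequence $F$, the routing of $P$ when given $P$ equals the routing of $P$ when given $F$. A randomized online algorithm is a probability distribution over deterministic online algorithms. *)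

(* Defs.v *)
From HB Require Import structures.
From mathcomp Require Import all_boot all_order all_algebra.
From mathcomp Require Import all_classical all_reals all_analysis.
Set Implicit Arguments. Unset Strict Implicit. Unset Printing Implicit Defensive.
Import Order.TTheory GRing.Theory Num.Theory.
Local Open Scope ring_scope.

(* A flow in the Clos network C_{N,R}: source server s_{i}^{k} (input switch
   I_i, server index k), destination server t_{j}^{l} (output switch O_j,
   server index l), and a demand (a real number in K). *)
Record flow (N R : nat) (K : Type) := Flow {
  fi : 'I_R;
  fk : 'I_N;
  fj : 'I_R;
  fl : 'I_N;
  dem : K
}.

Definition valid_flows (K : realType) (N R : nat) (F : seq (flow N R K)) : Prop :=
  all (fun f => 0 < dem f) F /\
  (forall (i : 'I_R) (k : 'I_N),
      \sum_(f <- F | (fi f == i) && (fk f == k)) dem f <= 1) /\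
  (forall (j : 'I_R) (l : 'I_N),
      \sum_(f <- F | (fj f == j) && (fl f == l)) dem f <= 1).

(* A routing of a sequence F of flows is a sequence r of middle switches with
   size r = size F: the p-th flow of F is routed through middle switch r_p. *)
Definition load_in (K : realType) (N R : nat) (F : seq (flow N R K))
    (r : seq 'I_N) (i : 'I_R) (m : 'I_N) : K :=
  \sum_(fr <- zip F r | (fi fr.1 == i) && (fr.2 == m)) dem fr.1.

Definition load_out (K : realType) (N R : nat) (F : seq (flow N R K))
    (r : seq 'I_N) (i : 'I_R) (m : 'I_N) : K :=
  \sum_(fr <- zip F r | (fj fr.1 == i) && (fr.2 == m)) dem fr.1.

(* congestion = max over i in [R], m in [N] of the in/out loads
   (loads are nonnegative for valid flows, so 0 is a neutral element). *)
Definition congestion (K : realType) (N R : nat) (F : seq (flow N R K))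
    (r : seq 'I_N) : K :=
  \big[Num.max/0]_(i < R) \big[Num.max/0]_(m < N)
     Num.max (load_in F r i m) (load_out F r i m).

Definition det_online_alg (K : realType) (N R : nat)
    (A : seq (flow N R K) -> seq 'I_N) : Prop :=
  (forall F, size (A F) = size F) /\
  (forall F n, A (take n F) = take n (A F)).

(* Main.v *)
Require Import Defs.
From HB Require Import structures.
From mathcomp Require Import all_boot all_order all_algebra.
From mathcomp Require Import all_classical all_reals all_analysis.
From mathcomp Require Import measurable_realfun.
From mathcomp Require Import zify.
Import Order.TTheory GRing.Theory Num.Theory.
Local Open Scope ring_scope.

Definition mkf (K : realType) (n m : nat) (i k j l : nat) : flow n.+2 m.+1 K :=
  Flow (inord i) (inord k) (inord j) (inord l) 1.
Arguments mkf {K n m}.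

Definition Pre (K : realType) (n m : nat) (t : nat) : seq (flow n.+2 m.+1 K) :=
  [seq mkf (3*t) k (3*t) k | k <- iota 0 n.+1] ++
  [seq mkf (3*t).+1 k (3*t).+1 k | k <- iota 0 n.+1].
Definition Cont (K : realType) (n m : nat) t (x : bool) : seq (flow n.+2 m.+1 K) :=
  if x then [:: mkf (3*t).+2 0 (3*t) n.+1; mkf (3*t).+2 1 (3*t).+1 n.+1]
  else [:: mkf (3*t) n.+1 (3*t).+1 n.+1].
Fixpoint Fr (K : realType) (n m : nat) t (bs : seq bool) : seq (flow n.+2 m.+1 K) :=
  match bs with
  | [::] => [::]
  | x :: bs' => (Pre K n m t ++ Cont K n m t x) ++ Fr K n m t.+1 bs'
  end.

Definition okr (K : realType) N R (x0 : flow N R K) (c0 : 'I_N)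
   (F : seq (flow N R K)) (r : seq 'I_N) :=
  forall p q, (p < q)%N -> (q < size F)%N ->
   (fi (nth x0 F p) == fi (nth x0 F q)) || (fj (nth x0 F p) == fj (nth x0 F q)) ->
   nth c0 r p != nth c0 r q.
Arguments okr {K N R}.

Lemma pigeon n (g : nat -> 'I_n.+2) :
  (forall k k', (k < k')%N -> (k' < n.+1)%N -> g k != g k') ->
  forall x y, (forall k, (k < n.+1)%N -> g k != x) ->
  (forall k, (k < n.+1)%N -> g k != y) -> x = y.
Proof.
move=> ginj x y gx gy; apply/eqP; apply/negPn/negP => xy.
pose G := [set g (val k) | k : 'I_n.+1].
have cG : #|G| = n.+1.
  rewrite card_imset ?card_ord // => k k' /= e; apply/val_inj => /=.
  case: (ltngtP k k') => // lt.
    by move: (ginj _ _ lt (ltn_ord k')); rewrite e eqxx.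
  by move: (ginj _ _ lt (ltn_ord k)); rewrite e eqxx.
have xG : x \notin G.
  by apply/imsetP => -[k _ e]; move: (gx k (ltn_ord k)); rewrite e eqxx.
have yG : y \notin G.
  by apply/imsetP => -[k _ e]; move: (gy k (ltn_ord k)); rewrite e eqxx.
have := max_card (mem (x |: (y |: G))).
rewrite !cardsU1 cG in_setU1 (negbTE xy) (negbTE xG) (negbTE yG) card_ord /=.
by rewrite ltnn.
Qed.


Lemma nth_catS (T : Type) (x0 : T) (h s : seq T) k : nth x0 (h ++ s) (size h + k) = nth x0 s k.
Proof. by rewrite nth_cat ltnNge leq_addr /= addKn. Qed.

Lemma nth_Pre1 K n m t x k : (k < n.+1)%N ->
  nth (mkf 0 0 0 0) (Pre K n m t ++ Cont K n m t x) k = mkf (3*t) k (3*t) k.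
Proof.
move=> kn; rewrite nth_cat size_cat !size_map size_iota ltn_addr // /Pre nth_cat size_map size_iota kn.
by rewrite (nth_map 0%N) ?size_iota // nth_iota.
Qed.

Lemma size_Pre K n m t : size (Pre K n m t) = (n.+1 + n.+1)%N.
Proof. by rewrite size_cat !size_map size_iota. Qed.

Lemma nth_Pre2 K n m t x k : (k < n.+1)%N ->
  nth (mkf 0 0 0 0) (Pre K n m t ++ Cont K n m t x) (n.+1 + k) = mkf (3*t).+1 k (3*t).+1 k.
Proof.
move=> kn; rewrite nth_cat size_Pre ltn_add2l kn /Pre.
rewrite nth_cat size_map size_iota ltnNge leq_addr -[~~ true]/false addKn.
by rewrite (nth_map 0%N) ?size_iota // nth_iota.
Qed.

Lemma nth_Cont K n m t x j :
  nth (mkf 0 0 0 0) (Pre K n m t ++ Cont K n m t x) (n.+1 + n.+1 + j) =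
  nth (mkf 0 0 0 0) (Cont K n m t x) j.
Proof. by rewrite -(size_Pre K n m t) nth_catS. Qed.

From mathcomp Require Import lra.

Lemma sum_ge_two (K : realType) N R (x0 : flow N R K) (c0 : 'I_N) (F : seq (flow N R K)) r
  (P : pred (flow N R K * 'I_N)) p q :
  all (fun f => dem f == 1) F -> size r = size F -> (p < q)%N -> (q < size F)%N ->
  P (nth x0 F p, nth c0 r p) -> P (nth x0 F q, nth c0 r q) ->
  2 <= \sum_(fr <- zip F r | P fr) dem fr.1.
Proof.
move=> hd sr pq qF Pp Pq.
have pF : (p < size F)%N by apply: ltn_trans pq qF.
have d1 : forall j, (j < size F)%N -> dem (nth x0 F j) = 1.
  by move=> j jF; apply/eqP; apply: (all_nthP x0 hd).
rewrite (big_nth (x0, c0)) size_zip sr minnn big_mkord.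
rewrite (bigD1 (Ordinal qF)) /=; last by rewrite nth_zip.
rewrite (bigD1 (Ordinal pF)) /=; last first.
  by rewrite nth_zip // Pp /= -(inj_eq val_inj) /= neq_ltn pq.
rewrite !nth_zip // /= !d1 //.
set s := \sum_(_ < _ | _) _.
have : 0 <= s.
  by apply: sumr_ge0 => j _; rewrite nth_zip //= d1 // -sr; apply: ltn_ord.
lra.
Qed.

Lemma sum_ge_one (K : realType) N R (x0 : flow N R K) (c0 : 'I_N) (F : seq (flow N R K)) r
  (P : pred (flow N R K * 'I_N)) p :
  all (fun f => dem f == 1) F -> size r = size F -> (p < size F)%N ->
  P (nth x0 F p, nth c0 r p) ->
  1 <= \sum_(fr <- zip F r | P fr) dem fr.1.
Proof.
move=> hd sr pF Pp.
have d1 : forall j, (j < size F)%N -> dem (nth x0 F j) = 1.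
  by move=> j jF; apply/eqP; apply: (all_nthP x0 hd).
rewrite (big_nth (x0, c0)) size_zip sr minnn big_mkord.
rewrite (bigD1 (Ordinal pF)) /=; last by rewrite nth_zip.
rewrite !nth_zip // /= !d1 //.
set s := \sum_(_ < _ | _) _.
have : 0 <= s.
  by apply: sumr_ge0 => j _; rewrite nth_zip //= d1 // -sr; apply: ltn_ord.
lra.
Qed.

Lemma le_bigmax_seq (K : realType) (T : eqType) (s : seq T) (G : T -> K) i :
  i \in s -> G i <= \big[Num.max/0]_(j <- s) G j.
Proof.
elim: s => // a s IH; rewrite in_cons big_cons le_max.
by case/orP => [/eqP -> | /IH ->]; rewrite ?lexx ?orbT.
Qed.

Lemma load_le_cong (K : realType) N R (F : seq (flow N R K)) r i m :
  load_in F r i m <= congestion F r /\ load_out F r i m <= congestion F r.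
Proof.
have H : Num.max (load_in F r i m) (load_out F r i m) <= congestion F r.
  rewrite /congestion.
  have h1 := @le_bigmax_seq K _ _ (fun i => \big[Num.max/0]_(m < N) Num.max (load_in F r i m) (load_out F r i m)) i (mem_index_enum i).
  have h2 := @le_bigmax_seq K _ _ (fun m => Num.max (load_in F r i m) (load_out F r i m)) m (mem_index_enum m).
  exact: (le_trans h2 h1).
by split; apply: le_trans H; rewrite le_max lexx ?orbT.
Qed.

Arguments load_le_cong {K N R}.

Lemma cong_lt2_ok (K : realType) N R (x0 : flow N R K) (c0 : 'I_N) F r :
  all (fun f => dem f == 1) F -> size r = size F -> congestion F r < 2 -> okr x0 c0 F r.
Proof.
move=> hd sr hc p q pq qF /orP H; apply/negP => /eqP e.
case: H => /eqP e'.
  have := @sum_ge_two K N R x0 c0 F r (fun fr => (fi fr.1 == fi (nth x0 F p)) && (fr.2 == nth c0 r p)) p q hd sr pq qF.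
  rewrite /= e' e !eqxx => /(_ isT isT) h2.
  have [h _] := load_le_cong F r (fi (nth x0 F q)) (nth c0 r q).
  have := le_trans h2 h; rewrite leNgt hc //.
have := @sum_ge_two K N R x0 c0 F r (fun fr => (fj fr.1 == fj (nth x0 F p)) && (fr.2 == nth c0 r p)) p q hd sr pq qF.
rewrite /= e' e !eqxx => /(_ isT isT) h2.
have [_ h] := load_le_cong F r (fj (nth x0 F q)) (nth c0 r q).
have := le_trans h2 h; rewrite leNgt hc //.
Qed.

Lemma cong_ge1 (K : realType) N R (x0 : flow N R K) (c0 : 'I_N) (F : seq (flow N R K)) (r : seq 'I_N) :
  all (fun f => dem f == 1) F -> size r = size F -> (0 < size F)%N -> 1 <= congestion F r.
Proof.
move=> hd sr F0.
have := @sum_ge_one K N R x0 c0 F r (fun fr => (fi fr.1 == fi (nth x0 F 0)) && (fr.2 == nth c0 r 0)) 0 hd sr F0.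
rewrite /= !eqxx => /(_ isT) h1.
have [h _] := load_le_cong F r (fi (nth x0 F 0)) (nth c0 r 0).
exact: le_trans h1 h.
Qed.

Lemma nthF (T : Type) (x0 : T) (h s rest : seq T) k : (k < size s)%N ->
  nth x0 (h ++ s ++ rest) (size h + k) = nth x0 s k.
Proof. by move=> ks; rewrite nth_catS nth_cat ks. Qed.

Lemma size_PC K n m t x : size (Pre K n m t ++ Cont K n m t x) = (n.+1 + n.+1 + (if x then 2 else 1))%N.
Proof. by rewrite size_cat size_Pre; case: x. Qed.

Lemma NA K n m t x h rest k : (k < n.+1)%N ->
  nth (mkf 0 0 0 0) (h ++ (Pre K n m t ++ Cont K n m t x) ++ rest) (size h + k) = mkf (3*t) k (3*t) k.
Proof. by move=> kn; rewrite nthF ?nth_Pre1 // size_PC; lia. Qed.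

Lemma NB K n m t x h rest k : (k < n.+1)%N ->
  nth (mkf 0 0 0 0) (h ++ (Pre K n m t ++ Cont K n m t x) ++ rest) (size h + (n.+1 + k)) = mkf (3*t).+1 k (3*t).+1 k.
Proof. by move=> kn; rewrite nthF ?nth_Pre2 // size_PC; lia. Qed.

Lemma NC K n m t x h rest j : (j < (if x then 2 else 1))%N ->
  nth (mkf 0 0 0 0) (h ++ (Pre K n m t ++ Cont K n m t x) ++ rest) (size h + (n.+1 + n.+1 + j)) =
  nth (mkf 0 0 0 0) (Cont K n m t x) j.
Proof. by move=> jn; rewrite nthF ?nth_Cont // size_PC; lia. Qed.

Lemma gadget (K : realType) n m (A : seq (flow n.+2 m.+1 K) -> seq 'I_n.+2)
  (hp : forall F k, A (take k F) = take k (A F))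
  h t rest1 rest2 :
  okr (mkf 0 0 0 0) ord0 (h ++ (Pre K n m t ++ Cont K n m t false) ++ rest1)
      (A (h ++ (Pre K n m t ++ Cont K n m t false) ++ rest1)) ->
  okr (mkf 0 0 0 0) ord0 (h ++ (Pre K n m t ++ Cont K n m t true) ++ rest2)
      (A (h ++ (Pre K n m t ++ Cont K n m t true) ++ rest2)) ->
  False.
Proof.
move=> ok1 ok2.
have sz : forall x rest, size (h ++ (Pre K n m t ++ Cont K n m t x) ++ rest) =
   (size h + (n.+1 + n.+1 + (if x then 2 else 1)) + size rest)%N.
  by move=> x rest; rewrite size_cat (size_cat _ rest) size_PC; lia.
pose L := (size h + (n.+1 + n.+1))%N.
have tk : forall x rest, take L (h ++ (Pre K n m t ++ Cont K n m t x) ++ rest) = h ++ Pre K n m t.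
  move=> x rest.
  have -> : h ++ (Pre K n m t ++ Cont K n m t x) ++ rest = (h ++ Pre K n m t) ++ (Cont K n m t x ++ rest).
    by rewrite -!catA.
  by rewrite take_size_cat // size_cat size_Pre.
have eqpre : forall p, (p < L)%N ->
   nth ord0 (A (h ++ (Pre K n m t ++ Cont K n m t false) ++ rest1)) p =
   nth ord0 (A (h ++ (Pre K n m t ++ Cont K n m t true) ++ rest2)) p.
  move=> p pL.
  by rewrite -(nth_take ord0 pL) -hp tk -(tk true rest2) hp nth_take.
set F1 := h ++ (Pre K n m t ++ Cont K n m t false) ++ rest1 in ok1 eqpre.
set F2 := h ++ (Pre K n m t ++ Cont K n m t true) ++ rest2 in ok2 eqpre.
pose col k := nth ord0 (A F1) (size h + k).
pose x := nth ord0 (A F1) (size h + (n.+1 + n.+1 + 0)).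
pose y := nth ord0 (A F2) (size h + (n.+1 + n.+1 + 0)).
pose z := nth ord0 (A F2) (size h + (n.+1 + n.+1 + 1)).
have c2 : forall k, (k < n.+1 + n.+1)%N -> col k = nth ord0 (A F2) (size h + k).
  by move=> k kn; rewrite /col eqpre // /L; lia.
have i1 : forall k k', (k < k')%N -> (k' < n.+1)%N -> col k != col k'.
  move=> k k' kk' k'n; apply: ok1; first lia.
    rewrite sz; lia.
  by rewrite !NA //= ?eqxx //; lia.
have i2 : forall k k', (k < k')%N -> (k' < n.+1)%N -> col (n.+1 + k) != col (n.+1 + k').
  move=> k k' kk' k'n; rewrite /col; apply: ok1; first lia.
    rewrite sz; lia.
  by rewrite !NB //= ?eqxx //; lia.
have ix : forall k, (k < n.+1)%N -> col k != x.
  move=> k kn; apply: ok1; first lia.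
    rewrite sz; lia.
  by rewrite NA // NC //= eqxx.
have ix2 : forall k, (k < n.+1)%N -> col (n.+1 + k) != x.
  move=> k kn; rewrite /col; apply: ok1; first lia.
    rewrite sz; lia.
  by rewrite NB // NC //= eqxx orbT.
have iy : forall k, (k < n.+1)%N -> col k != y.
  move=> k kn; rewrite c2; last lia.
  apply: ok2; first lia.
    rewrite sz; lia.
  by rewrite NA // NC //= eqxx orbT.
have iz : forall k, (k < n.+1)%N -> col (n.+1 + k) != z.
  move=> k kn; rewrite c2; last lia.
  apply: ok2; first lia.
    rewrite sz; lia.
  by rewrite NB // NC //= eqxx orbT.
have yz : y != z.
  apply: ok2; first lia.
    rewrite sz; lia.
  by rewrite !NC //= eqxx.
have exy := @pigeon n col i1 x y ix iy.
have exz := @pigeon n (fun k => col (n.+1 + k)) i2 x z ix2 iz.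
by move: yz; rewrite -exy -exz eqxx.
Qed.

Lemma FrS K n m t x bs : Fr K n m t (x :: bs) = (Pre K n m t ++ Cont K n m t x) ++ Fr K n m t.+1 bs.
Proof. by []. Qed.

Lemma core (K : realType) n m (A : seq (flow n.+2 m.+1 K) -> seq 'I_n.+2)
  (hp : forall F k, A (take k F) = take k (A F)) :
  forall bs bs' t h, size bs = size bs' -> bs != bs' ->
  okr (mkf 0 0 0 0) ord0 (h ++ Fr K n m t bs) (A (h ++ Fr K n m t bs)) ->
  okr (mkf 0 0 0 0) ord0 (h ++ Fr K n m t bs') (A (h ++ Fr K n m t bs')) -> False.
Proof.
elim=> [|x bs IH] [|x' bs'] t h //.
rewrite !FrS => -[sz] neq ok1 ok2.
case: (boolP (x == x')) => [/eqP exx | nxx].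
  subst x'; apply: (IH bs' t.+1 (h ++ (Pre K n m t ++ Cont K n m t x))) => //.
  + by move: neq; rewrite eqseq_cons eqxx.
  + by rewrite -catA.
  + by rewrite -catA.
case: x x' nxx ok1 ok2 {neq} => [] [] // _ ok1 ok2.
  exact: (@gadget K n m A hp _ _ _ _ ok2 ok1).
exact: (@gadget K n m A hp _ _ _ _ ok1 ok2).
Qed.

Definition row (a : nat) (s : seq nat) : seq (nat * nat) := [seq (a, k) | k <- s].

Definition sk K N R (f : flow N R K) : nat * nat := (nat_of_ord (fi f), nat_of_ord (fk f)).
Definition dk K N R (f : flow N R K) : nat * nat := (nat_of_ord (fj f), nat_of_ord (fl f)).
Arguments sk {K N R}.
Arguments dk {K N R}.

Lemma map_row K n m (g : nat -> flow n.+2 m.+1 K) (key : flow n.+2 m.+1 K -> nat * nat) a :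
  (forall k, (k < n.+1)%N -> key (g k) = (a, k)) ->
  map key [seq g k | k <- iota 0 n.+1] = row a (iota 0 n.+1).
Proof.
move=> hk; rewrite -map_comp /row; apply/eq_in_map => k; rewrite mem_iota /= => kn.
by apply: hk.
Qed.

Lemma sk_gad K n m t x : (3 * t + 2 <= m)%N ->
  map sk (Pre K n m t ++ Cont K n m t x) =
  row (3*t) (iota 0 n.+1) ++ row (3*t).+1 (iota 0 n.+1) ++
  (if x then [:: ((3*t).+2, 0%N); ((3*t).+2, 1%N)] else [:: (3*t, n.+1)]).
Proof.
move=> tm; rewrite map_cat /Pre map_cat -catA.
rewrite (@map_row K n m _ _ (3*t)); last first.
  by move=> k kn; rewrite /sk /= !inordK //; lia.
rewrite (@map_row K n m _ _ ((3*t).+1)); last first.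
  by move=> k kn; rewrite /sk /= !inordK //; lia.
by case: x; rewrite /Cont /= /sk /= !inordK //; lia.
Qed.

Lemma dk_gad K n m t x : (3 * t + 2 <= m)%N ->
  map dk (Pre K n m t ++ Cont K n m t x) =
  row (3*t) (iota 0 n.+1) ++ row (3*t).+1 (iota 0 n.+1) ++
  (if x then [:: (3*t, n.+1); ((3*t).+1, n.+1)] else [:: ((3*t).+1, n.+1)]).
Proof.
move=> tm; rewrite map_cat /Pre map_cat -catA.
rewrite (@map_row K n m _ _ (3*t)); last first.
  by move=> k kn; rewrite /dk /= !inordK //; lia.
rewrite (@map_row K n m _ _ ((3*t).+1)); last first.
  by move=> k kn; rewrite /dk /= !inordK //; lia.
by case: x; rewrite /Cont /= /dk /= !inordK //; lia.
Qed.

Lemma uniq_row a s : uniq s -> uniq (row a s).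
Proof. by move=> us; rewrite map_inj_uniq // => x y []. Qed.

Lemma uniq_gad a n (C : seq (nat * nat)) : uniq C ->
  (forall u, u \in C -> ((u.1 != a) && (u.1 != a.+1)) || (n.+1 <= u.2)%N) ->
  uniq (row a (iota 0 n.+1) ++ row a.+1 (iota 0 n.+1) ++ C).
Proof.
move=> uC hC.
rewrite cat_uniq uniq_row ?iota_uniq // has_cat cat_uniq uniq_row ?iota_uniq // uC andbT.
apply/and4P; split => //; first (apply/norP; split).
- apply/hasPn => u /mapP [k _ ->]; apply/mapP => -[k' _ [e _]]; lia.
- apply/hasPn => u uC'; apply/mapP => -[k' kin eu].
  move: (hC u uC'); rewrite eu /=; move: kin; rewrite mem_iota; lia.
- apply/hasPn => u uC'; apply/mapP => -[k' kin eu].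
  move: (hC u uC'); rewrite eu /=; move: kin; rewrite mem_iota; lia.
Qed.

Lemma range_gad a n (C : seq (nat * nat)) u :
  (forall u, u \in C -> (a <= u.1 <= a.+2)%N) ->
  u \in row a (iota 0 n.+1) ++ row a.+1 (iota 0 n.+1) ++ C -> (a <= u.1 <= a.+2)%N.
Proof.
move=> hC; rewrite !mem_cat => /orP [/mapP [k _ ->] /= | /orP [/mapP [k _ ->] /= | /hC //]]; lia.
Qed.

Lemma uniq_Fr (K : realType) n m (key : flow n.+2 m.+1 K -> nat * nat)
  (hgad : forall t x, (3 * t + 2 <= m)%N -> uniq (map key (Pre K n m t ++ Cont K n m t x)) /\
     forall u, u \in map key (Pre K n m t ++ Cont K n m t x) -> (3 * t <= u.1 <= 3 * t + 2)%N) :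
  forall bs t, (3 * (t + size bs) <= m.+1)%N ->
  uniq (map key (Fr K n m t bs)) /\ forall u, u \in map key (Fr K n m t bs) -> (3 * t <= u.1)%N.
Proof.
elim=> [|x bs IH] t hb; first by split.
have [u1 r1] := hgad t x ltac:(simpl in hb; lia).
have [u2 r2] := IH t.+1 ltac:(simpl in hb; lia).
rewrite FrS map_cat; split.
  rewrite cat_uniq u1 u2 andbT /=; apply/hasPn => u /r2 h1; apply/negP => /r1 h2; lia.
move=> u; rewrite mem_cat => /orP [/r1 | /r2]; lia.
Qed.

Lemma sk_hyp (K : realType) n m t x : (3 * t + 2 <= m)%N ->
  uniq (map sk (Pre K n m t ++ Cont K n m t x)) /\
  forall u, u \in map sk (Pre K n m t ++ Cont K n m t x) -> (3 * t <= u.1 <= 3 * t + 2)%N.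
Proof.
move=> tm; rewrite sk_gad //; split.
  apply: uniq_gad; case: x => //=.
  - by rewrite inE xpair_eqE andbF.
  - by move=> u; rewrite !inE => /orP [] /eqP -> /=; lia.
  - by move=> u; rewrite !inE => /eqP -> /=; lia.
move=> u hu.
suff: (3*t <= u.1 <= (3*t).+2)%N by lia.
apply: (@range_gad (3*t) n _ u _ hu); case: x {hu} => u'; rewrite !inE.
  by case/orP => /eqP -> /=; lia.
by move=> /eqP -> /=; lia.
Qed.

Lemma dk_hyp (K : realType) n m t x : (3 * t + 2 <= m)%N ->
  uniq (map dk (Pre K n m t ++ Cont K n m t x)) /\
  forall u, u \in map dk (Pre K n m t ++ Cont K n m t x) -> (3 * t <= u.1 <= 3 * t + 2)%N.
Proof.
move=> tm; rewrite dk_gad //; split.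
  apply: uniq_gad; case: x => //=.
  - rewrite inE xpair_eqE andbT; apply/negP => /andP [/eqP h _]; lia.
  - by move=> u; rewrite !inE => /orP [] /eqP -> /=; lia.
  - by move=> u; rewrite !inE => /eqP -> /=; lia.
move=> u hu.
suff: (3*t <= u.1 <= (3*t).+2)%N by lia.
apply: (@range_gad (3*t) n _ u _ hu); case: x {hu} => u'; rewrite !inE.
  by case/orP => /eqP -> /=; lia.
by move=> /eqP -> /=; lia.
Qed.

Lemma dem_Fr (K : realType) n m bs t : all (fun f => dem f == 1) (Fr K n m t bs).
Proof.
elim: bs t => [|x bs IH] t //; rewrite FrS !all_cat IH andbT.
rewrite !all_map -andbA; apply/and3P; split.
- by apply/allP => k _ /=.
- by apply/allP => k _ /=.
- by case: x => /=; rewrite eqxx.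
Qed.

Lemma sum_count (K : realType) N R (F : seq (flow N R K)) (P : pred (flow N R K)) :
  all (fun f => dem f == 1) F -> \sum_(f <- F | P f) dem f = (count P F)%:R.
Proof.
elim: F => [|f F IH] /=; first by rewrite big_nil.
move=> /andP [/eqP d1 hd]; rewrite big_cons IH //.
by case: (P f); rewrite /= ?d1 ?natrD ?add0n.
Qed.

Lemma sum_le1 (K : realType) N R (F : seq (flow N R K)) (key : flow N R K -> nat * nat) c :
  all (fun f => dem f == 1) F -> uniq (map key F) ->
  \sum_(f <- F | key f == c) dem f <= 1.
Proof.
move=> hd uF.
rewrite sum_count // -[X in _ <= X]/(1%:R) ler_nat.
have -> : count (fun f => key f == c) F = count (pred1 c) (map key F).
  by rewrite count_map.
by rewrite count_uniq_mem // leq_b1.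
Qed.

Lemma valid_Fr (K : realType) n m bs : (3 * size bs <= m.+1)%N ->
  valid_flows (Fr K n m 0 bs).
Proof.
move=> hb; have hd := dem_Fr K n m bs 0.
have [us _] := @uniq_Fr K n m sk (@sk_hyp K n m) bs 0 hb.
have [ud _] := @uniq_Fr K n m dk (@dk_hyp K n m) bs 0 hb.
split; [|split].
- by apply: sub_all hd => f /eqP ->; exact: ltr01.
- move=> i k; rewrite (eq_bigl (fun f => sk f == (nat_of_ord i, nat_of_ord k))).
    exact: sum_le1.
  by move=> f; rewrite /sk xpair_eqE.
- move=> i k; rewrite (eq_bigl (fun f => dk f == (nat_of_ord i, nat_of_ord k))).
    exact: sum_le1.
  by move=> f; rewrite /dk xpair_eqE.
Qed.

Local Open Scope classical_set_scope.
Lemma meas_comp (K : realType) N R (d : measure_display) (Omega : measurableType d)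
  (A : Omega -> seq (flow N R K) -> seq 'I_N) (F : seq (flow N R K)) (g : seq 'I_N -> \bar K) :
  (forall w, size (A w F) = size F) ->
  (forall r, measurable [set w | A w F = r]) ->
  measurable_fun setT (fun w => g (A w F)).
Proof.
move=> hs hm _ Y mY; rewrite setTI.
have -> : (fun w => g (A w F)) @^-1` Y =
   \bigcup_(r in [set r : (size F).-tuple 'I_N | Y (g (tval r))]) [set w | A w F = tval r].
  apply/seteqP; split => w /=.
    by move=> Yw; exists (@Tuple (size F) _ (A w F) (introT eqP (hs w))).
  by case=> r /= Yr e; rewrite e.
apply: fin_bigcup_measurable; first exact: finite_finset.
by move=> r _; exact: hm.
Qed.

Lemma size_Fr_pos K n m t bs : (0 < size bs)%N -> (0 < size (Fr K n m t bs))%N.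
Proof. by case: bs => // x bs _; rewrite FrS size_cat size_PC; lia. Qed.

Theorem mainTheorem6 (K : realType) (N R : nat) (hN : (2 <= N)%N) (hR : (3 <= R)%N)
  (d : measure_display) (Omega : measurableType d) (P : probability Omega K)
  (A : Omega -> seq (flow N R K) -> seq 'I_N)
  (hdet : forall w, det_online_alg (A w))
  (hmeas : forall (F : seq (flow N R K)) (r : seq 'I_N),
      measurable [set w | A w F = r]) :
  exists F : seq (flow N R K),
    valid_flows F /\ all (fun f => dem f == 1) F /\
    ((2 - 1 / 2 ^+ (R %/ 3) : K)%:E <=
       \int[P]_(w in [set: Omega]) (congestion F (A w F))%:E)%E.
Proof.
case: N hN A hdet hmeas => [|[|n]] // _ A hdet hmeas.
case: R hR A hdet hmeas => [|m] // hR A hdet hmeas.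
set S := (m.+1 %/ 3)%N.
have hS : (3 * S <= m.+1)%N by rewrite mulnC leq_trunc_div.
have S0 : (0 < S)%N by rewrite divn_gt0.
pose FB (b : S.-tuple bool) := Fr K n m 0 (tval b).
pose c : K := 2 - 1 / 2 ^+ S.
pose M := #|{: S.-tuple bool}|.
have hM : M = (2 ^ S)%N by rewrite /M card_tuple card_bool.
have M0 : (0 < M)%N by rewrite hM expn_gt0.
have cM : c *+ M = 2 * M%:R - 1.
  rewrite -[c *+ M]mulr_natr hM natrX /c mulrBl div1r mulVf ?expf_neq0 // mul1r.
pose f (b : S.-tuple bool) w := (congestion (FB b) (A w (FB b)))%:E.
have ge1 : forall w b, 1 <= congestion (FB b) (A w (FB b)).
  move=> w b; have [hs hp] := hdet w.
  apply: (@cong_ge1 K _ _ (mkf 0 0 0 0) ord0); [exact: dem_Fr | exact: hs |].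
  by apply: size_Fr_pos; rewrite size_tuple.
have hpt : forall w, 2 * M%:R - 1 <= \sum_(b : S.-tuple bool) congestion (FB b) (A w (FB b)).
  move=> w; have [hs hp] := hdet w.
  have ok : forall b, congestion (FB b) (A w (FB b)) < 2 -> okr (mkf 0 0 0 0) ord0 (FB b) (A w (FB b)).
    by move=> b; apply: cong_lt2_ok; [exact: dem_Fr | exact: hs].
  have uniq2 : forall b b', b != b' -> congestion (FB b) (A w (FB b)) < 2 ->
      2 <= congestion (FB b') (A w (FB b')).
    move=> b b' neq l1; rewrite leNgt; apply/negP => l2.
    apply: (@core K n m (A w) hp (tval b) (tval b') 0 [::]).
    - by rewrite !size_tuple.
    - by apply: contra neq => /eqP e; apply/eqP/val_inj.
    - exact: ok b l1.
    - exact: ok b' l2.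
  case: (pselect (exists b, congestion (FB b) (A w (FB b)) < 2)) => [[b0 l0] | hno].
    rewrite (bigD1 b0) //=.
    have : \sum_(b | b != b0) (2 : K) <= \sum_(b | b != b0) congestion (FB b) (A w (FB b)).
      by apply: ler_sum => b hb; apply: (uniq2 b0) => //; rewrite eq_sym.
    rewrite (sumr_const (predC1 b0)) cardC1 -/M -[_ *+ M.-1]mulr_natr.
    have hMk : (M%:R : K) = (M.-1)%:R + 1 by rewrite natr1 prednK.
    rewrite hMk; have := ge1 w b0; lra.
  have : \sum_(b : S.-tuple bool) (2 : K) <= \sum_(b : S.-tuple bool) congestion (FB b) (A w (FB b)).
    apply: ler_sum => b _; rewrite leNgt; apply/negP => l; apply: hno; by exists b.
  rewrite sumr_const -/M -mulr_natr.
  have : (1 : K) <= M%:R by rewrite ler1n.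
  lra.
have mf : forall b, measurable_fun setT (f b).
  move=> b; exact: (@meas_comp K _ _ d Omega A (FB b) (fun r => (congestion (FB b) r)%:E)
     (fun w => (hdet w).1 (FB b)) (hmeas (FB b))).
have f0 : forall b w, [set: Omega] w -> (0 <= f b w)%E.
  move=> b w _; rewrite lee_fin; apply: le_trans (ge1 w b); exact: ler01.
have hsum := @ge0_integral_sum d Omega K P setT measurableT _ f mf f0 (index_enum {: S.-tuple bool}).
have hlow : ((2 * M%:R - 1)%:E <= \int[P]_(w in [set: Omega]) (\sum_(b <- index_enum {: S.-tuple bool}) f b w))%E.
  have ic := @integral_cst d Omega K P setT measurableT ((2 * M%:R - 1)%:E).
  rewrite (_ : (_ * _)%E = (2 * M%:R - 1)%:E) in ic; last first.
    by rewrite -[RHS]mule1; congr (_ * _)%E; exact: probability_setT.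
  rewrite -ic.
  apply: ge0_le_integral.
  - exact: measurableT.
  - move=> w _; rewrite lee_fin.
    have : (1 : K) <= M%:R by rewrite ler1n.
    lra.
  - exact: measurable_cst.
  - exact: emeasurable_sum.
  - by move=> w _; rewrite /f sumEFin lee_fin; exact: hpt w.
case: (pselect (exists b, (c%:E <= \int[P]_(w in [set: Omega]) f b w)%E)) => [[b hb] | hno].
  exists (FB b); split; first by apply: valid_Fr; rewrite size_tuple.
  by split; [exact: dem_Fr | exact: hb].
exfalso.
have lt : forall b, (\int[P]_(w in [set: Omega]) f b w < c%:E)%E.
  by move=> b; rewrite ltNge; apply/negP => h; apply: hno; exists b.
have fin : forall b, (\int[P]_(w in [set: Omega]) f b w)%E \is a fin_num.
  move=> b; rewrite ge0_fin_numE; last by apply: integral_ge0 => w Dw; exact: f0.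
  exact: lt_trans (lt b) (ltry c).
move: hlow; rewrite hsum -(EFin_sum_fine _ (fun b _ => fin b)) lee_fin => hle.
have : \sum_(b <- index_enum {: S.-tuple bool}) fine (\int[P]_(w in [set: Omega]) f b w)%E <
       \sum_(b <- index_enum {: S.-tuple bool}) c.
  apply: ltr_sum.
    by apply/hasP; exists (nseq_tuple S false); rewrite ?mem_index_enum.
  by move=> b _; rewrite -lte_fin fineK.
rewrite sumr_const -/M cM.
lra.
Qed.
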